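(* Let $Z$ be an abelian group, $K$ a group, and $\theta,\mu:K\times K\to Z$ loop cocycles such that $\nu(x,y)=\theta(x,y)\mu(x,y)^{-1}$ is a group cocycle. Then the left inner mappings of $K\ltimes_\theta Z$ and $K\ltimes_\mu Z$ coincide: for all $u,v,w\in K\times Z$, the element $(uv)\backslash(u(vw))$ computed in $K\ltimes_\theta Z$ equals the one computed in $K\ltimes_\mu Z$.
   Context: A loop cocycle is a map $\theta:K\times K\to Z$ with $\theta(x,1)=\theta(1,x)=1$ for all $x\in K$. It is a group cocycle if moreover $\theta(x,y)\theta(xy,z)=\theta(y,z)\theta(x,yz)$ for all $x,y,z\in K$. For a loop cocycle $\theta$, $K\ltimes_\theta Z$ is the loop on $K\times Z$ with multiplication $(x,a)(y,b)=(xy,\,ab\,\theta(x,y))$; $u\backslash w$ denotes the unique $z$ with $uz=w$. *)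

(* Defs.v *)
(* Z is an abelian group, written additively (zmodType);
   K is an arbitrary (possibly infinite) group given by its carrier and operations. *)
From HB Require Import structures.
From mathcomp Require Import all_boot all_order all_algebra.
Set Implicit Arguments. Unset Strict Implicit. Unset Printing Implicit Defensive.
Import GRing.Theory.
Local Open Scope ring_scope.

Record is_group (K : Type) (mul : K -> K -> K) (one : K) (inv : K -> K) : Prop := {
  grp_assoc : forall x y z, mul x (mul y z) = mul (mul x y) z;
  grp_mul1 : forall x, mul one x = x;
  grp_mulr1 : forall x, mul x one = x;
  grp_mulV : forall x, mul (inv x) x = one;
  grp_mulVr : forall x, mul x (inv x) = one
}.

Definition loop_cocycle (K : Type) (Z : zmodType) (one : K) (theta : K -> K -> Z) : Prop :=
  forall x, theta x one = 0 /\ theta one x = 0.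

Definition group_cocycle (K : Type) (Z : zmodType) (mul : K -> K -> K) (one : K)
    (theta : K -> K -> Z) : Prop :=
  loop_cocycle one theta /\
  forall x y z, theta x y + theta (mul x y) z = theta y z + theta x (mul y z).

(* Multiplication of K ⋉_theta Z on K * Z:
   (x,a)(y,b) = (xy, ab theta(x,y)), additively a + b + theta x y. *)
Definition ext_mul (K : Type) (Z : zmodType) (mul : K -> K -> K) (theta : K -> K -> Z)
    (u v : K * Z) : K * Z :=
  (mul u.1 v.1, u.2 + v.2 + theta u.1 v.1).

(* Main.v *)
Require Import Defs.
From HB Require Import structures.
From mathcomp Require Import all_boot all_order all_algebra.
Import GRing.Theory.
Local Open Scope ring_scope.

Lemma l1 (Z : zmodType) (a b c p q r s : Z) : a+b+p+(c+q+r-p-s)+s = a+(b+c+q)+r.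
Proof. by rewrite -addrA subrK [c+q+r-p]addrC addrA addrK !addrA. Qed.

Lemma l1' (Z : zmodType) (a b c p q r s : Z) : a+b+p+(c+(q+r-p-s))+s = a+(b+c+q)+r.
Proof. rewrite !(addrA c); exact: l1. Qed.

Lemma l3 (Z : zmodType) (a b c d X : Z) : (a+b+X) - (a+c) - (b+d) = X - c - d.
Proof. rewrite !opprD -!addrA [X + (-a + _)]addrCA [b + (-a + _)]addrCA addNKr.
by rewrite [-c + (-b + _)]addrCA [X + (-b+_)]addrCA addNKr. Qed.

Lemma l2 (Z : zmodType) (p q r s p' q' r' s' : Z) :
  p-p' + (s-s') = q-q' + (r-r') -> q+r-p-s = q'+r'-p'-s'.
Proof.
move=> H.
rewrite -[q](subrK q') -[r](subrK r') -[p](subrK p') -[s](subrK s').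
by rewrite addrACA -H l3.
Qed.

Theorem lemma4p10 (Z : zmodType) (K : Type) (mul : K -> K -> K) (one : K) (inv : K -> K)
  (theta mu : K -> K -> Z) :
  is_group mul one inv ->
  loop_cocycle one theta ->
  loop_cocycle one mu ->
  group_cocycle mul one (fun x y => theta x y - mu x y) ->
  forall u v w : K * Z,
    exists z : K * Z,
      ext_mul mul theta (ext_mul mul theta u v) z
        = ext_mul mul theta u (ext_mul mul theta v w) /\
      ext_mul mul mu (ext_mul mul mu u v) z
        = ext_mul mul mu u (ext_mul mul mu v w).
Proof.
move=> G _ _ [_ H] [x a] [y b] [t c].
exists (t, c + (theta y t + theta x (mul y t) - theta x y - theta (mul x y) t)).
have E : theta y t + theta x (mul y t) - theta x y - theta (mul x y) t
       = mu y t + mu x (mul y t) - mu x y - mu (mul x y) t by apply: l2; apply: H.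
rewrite /ext_mul /= (grp_assoc G); split; congr pair; first by rewrite l1'.
by rewrite E l1'.
Qed.
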